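(* Let $(X,\le)$ be a non-empty strictly inductive poset, $f:X\to X$ and $a_0\in X$ with $a_0\le f(a_0)$. Let $W$ be the set of elements of $X$ that are the least upper bound of some $a_0$-chain, and let $N$ be the smallest subset of $X$ containing $a_0$, closed under $f$, and closed under non-empty least upper bounds. If $f$ is monotone on $W$ (i.e. $f(x)\le f(y)$ for all $x,y\in W$ with $x\le y$), then $N\subseteq W$.
   Context: A poset is strictly inductive if every non-empty chain has a least upper bound $\mathrm{lub}$ in $X$. A set $Z\subseteq X$ is closed under $f$ if $f(z)\in Z$ for all $z\in Z$, and closed under non-empty least upper bounds if for every non-empty $P\subseteq Z$, $\mathrm{lub}(P)$ exists and belongs to $Z$. A subset $C\subseteq X$ is an $a_0$-chain (with respect to $f$) if: $C$ is well ordered by $\le$; $a_0$ is the least element of $C$; $C$ is closed under non-empty least upper bounds; and for every $z\in C\setminus\{\mathrm{lub}(C)\}$ we have $f(z)\in C$, $z<f(z)$, and there is no $y\in C$ with $z<y<f(z)$. *)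

(* Defs.v *)
(* a poset is a carrier type T with a relation le,
   partial-order axioms given as explicit hypotheses of the theorem.
   Subsets of T are predicates T -> Prop. *)

Section Defs.
Context {T : Type} (le : T -> T -> Prop).

Definition lt (x y : T) : Prop := le x y /\ x <> y.

Definition is_ub (P : T -> Prop) (x : T) : Prop := forall y, P y -> le y x.

Definition is_lub (P : T -> Prop) (x : T) : Prop :=
  is_ub P x /\ (forall z, is_ub P z -> le x z).

Definition nonempty (P : T -> Prop) : Prop := exists x, P x.

Definition subset (P Q : T -> Prop) : Prop := forall x, P x -> Q x.

Definition is_chain (P : T -> Prop) : Prop :=
  forall x y, P x -> P y -> le x y \/ le y x.

Definition strictly_inductive : Prop :=
  forall P, nonempty P -> is_chain P -> exists x, is_lub P x.

Definition closed_under (f : T -> T) (Z : T -> Prop) : Prop :=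
  forall z, Z z -> Z (f z).

Definition closed_under_lubs (Z : T -> Prop) : Prop :=
  forall P, nonempty P -> subset P Z -> exists l, is_lub P l /\ Z l.

Definition well_ordered (C : T -> Prop) : Prop :=
  forall P, nonempty P -> subset P C -> exists m, P m /\ forall y, P y -> le m y.

Definition a0_chain (f : T -> T) (a0 : T) (C : T -> Prop) : Prop :=
  well_ordered C /\
  (C a0 /\ forall c, C c -> le a0 c) /\
  closed_under_lubs C /\
  (forall z, C z -> ~ is_lub C z ->
     C (f z) /\ lt z (f z) /\ ~ (exists y, C y /\ lt z y /\ lt y (f z))).

Definition Wset (f : T -> T) (a0 : T) (x : T) : Prop :=
  exists C, a0_chain f a0 C /\ is_lub C x.

Definition smallest_closed (f : T -> T) (a0 : T) (N : T -> Prop) : Prop :=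
  (N a0 /\ closed_under f N /\ closed_under_lubs N) /\
  (forall Z, Z a0 -> closed_under f Z -> closed_under_lubs Z -> subset N Z).

End Defs.

(* Main.v *)
Require Import Defs.
From Stdlib Require Import Classical.

Section S.
Variable T : Type.
Variable le : T -> T -> Prop.
Hypothesis le_refl : forall x, le x x.
Hypothesis le_antisym : forall x y, le x y -> le y x -> x = y.
Hypothesis le_trans : forall x y z, le x y -> le y z -> le x z.
Variable f : T -> T.
Variable a0 : T.

Definition initseg (C D : T -> Prop) :=
  subset C D /\ forall c d, C c -> D d -> le d c -> C d.

Lemma lub_unique P x y : is_lub le P x -> is_lub le P y -> x = y.
Proof. intros [Hx1 Hx2] [Hy1 Hy2]. apply le_antisym; auto. Qed.

Lemma wo_chain C : well_ordered le C -> is_chain le C.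
Proof.
  intros HW x y Hx Hy.
  destruct (HW (fun z => z = x \/ z = y)) as [m [Hm1 Hm2]].
  - exists x; auto.
  - intros z [ ->| ->]; auto.
  - destruct Hm1 as [ ->| ->]; [left|right]; apply Hm2; auto.
Qed.

Lemma ac_wo C : a0_chain le f a0 C -> well_ordered le C.
Proof. intros [H _]; exact H. Qed.

Lemma ac_chain C : a0_chain le f a0 C -> is_chain le C.
Proof. intros [H _]. now apply wo_chain. Qed.

Lemma ac_a0 C : a0_chain le f a0 C -> C a0 /\ forall c, C c -> le a0 c.
Proof. intros [_ [H _]]. exact H. Qed.

Lemma ac_lubs C : a0_chain le f a0 C -> closed_under_lubs le C.
Proof. intros [_ [_ [H _]]]. exact H. Qed.

Lemma ac_succ C : a0_chain le f a0 C -> forall z, C z -> ~ is_lub le C z ->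
     C (f z) /\ lt le z (f z) /\ ~ (exists y, C y /\ lt le z y /\ lt le y (f z)).
Proof. intros [_ [_ [_ H]]]. exact H. Qed.

Lemma lub_in C x : a0_chain le f a0 C -> is_lub le C x -> C x.
Proof.
  intros HC Hx. destruct (ac_lubs C HC C) as [l [Hl HCl]].
  - exists a0. apply (ac_a0 C HC).
  - intros z; auto.
  - rewrite (lub_unique C x l Hx Hl); exact HCl.
Qed.

Lemma next_elem E e (A : T -> Prop) l :
  a0_chain le f a0 E -> E e -> (forall x, A x <-> E x /\ lt le x e) ->
  is_lub le A l -> E l ->
  (A l /\ e = f l) \/ (~ A l /\ e = l).
Proof.
  intros HE He HA Hl HEl.
  assert (Hub : is_ub le A e).
  { intros x Hx. apply HA in Hx. destruct Hx as [_ [H _]]; exact H. }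
  destruct (classic (A l)) as [HAl | HAl].
  - left. split; [exact HAl|].
    pose proof (proj1 (HA l) HAl) as [_ [Hle Hne]].
    assert (Hnl : ~ is_lub le E l).
    { intros [Hub' _]. apply Hne. apply le_antisym; auto. }
    destruct (ac_succ E HE l HEl Hnl) as [Hfl [[Hlf Hnf] Hnb]].
    destruct (ac_chain E HE e (f l) He Hfl) as [H1 | H1].
    + destruct (classic (e = f l)) as [Heq|Hneq]; [exact Heq|].
      exfalso. apply Hnb. exists e. split; [exact He|]. split; split; auto.
    + destruct (classic (f l = e)) as [Heq|Hneq]; [auto|].
      exfalso. assert (HAf : A (f l)) by (apply HA; split; [exact Hfl| split; auto]).
      apply Hnf. apply le_antisym; [exact Hlf| exact (proj1 Hl _ HAf)].
  - right. split; [exact HAl|].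
    assert (Hle : le l e) by (apply (proj2 Hl); exact Hub).
    destruct (classic (l = e)) as [Heq|Hneq]; [auto|].
    exfalso. apply HAl. apply HA. split; auto. split; auto.
Qed.

Lemma compare C D : a0_chain le f a0 C -> a0_chain le f a0 D ->
  initseg C D \/ initseg D C.
Proof.
  intros HC HD.
  pose (Q := fun c => D c /\ forall y, (C y /\ le y c) <-> (D y /\ le y c)).
  destruct (classic (forall c, C c -> Q c)) as [Hall | Hex].
  - left. split.
    + intros c Hc. exact (proj1 (Hall c Hc)).
    + intros c d Hc Hd Hdc. apply (proj2 (proj2 (Hall c Hc) d)). auto.
  - right.
    apply not_all_ex_not in Hex. destruct Hex as [c0 Hc0].
    apply imply_to_and in Hc0. destruct Hc0 as [Hc0 HQ0].
    destruct (ac_wo C HC (fun c => C c /\ ~ Q c)) as [c [[Hc HQc] Hmin]].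
    { exists c0; auto. }
    { intros x [Hx _]; exact Hx. }
    assert (Hbelow : forall x, C x -> lt le x c -> Q x).
    { intros x Hx [Hxc Hne]. apply NNPP. intro HQx. apply Hne. apply le_antisym; auto. }
    pose (A := fun x => C x /\ lt le x c).
    assert (HAC : forall x, A x <-> C x /\ lt le x c) by (intros; unfold A; tauto).
    assert (HDA : forall x, D x -> A x).
    { apply NNPP. intro Hn. apply not_all_ex_not in Hn. destruct Hn as [d0 Hd0].
      apply imply_to_and in Hd0. destruct Hd0 as [Hd0 HAd0].
      destruct (ac_wo D HD (fun d => D d /\ ~ A d)) as [d [[Hd HAd] Hmind]].
      { exists d0; auto. }
      { intros x [Hx _]; exact Hx. }
      assert (HAiff : forall x, A x <-> D x /\ lt le x d).
      { intros x; split.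
        - intros [Hx [Hxc Hxne]].
          destruct (Hbelow x Hx (conj Hxc Hxne)) as [HDx HQx].
          split; [exact HDx|].
          destruct (ac_chain D HD x d HDx Hd) as [Hxd | Hdx].
          + split; [exact Hxd|]. intro Heq. subst x. apply HAd. exact (conj Hx (conj Hxc Hxne)).
          + exfalso. apply HAd. destruct (proj2 (HQx d) (conj Hd Hdx)) as [HCd _].
            split; [exact HCd|]. split; [eauto|]. intro Heq. subst d.
            apply Hxne. apply le_antisym; auto.
        - intros [HDx [Hxd Hxne]]. apply NNPP. intro HAx.
          apply Hxne. apply le_antisym; [exact Hxd| apply Hmind; split; auto]. }
      assert (Hcd : c = d).
      { destruct (classic (A a0)) as [HA0 | HA0].
        - destruct (ac_lubs C HC A) as [l [Hl HCl]].
          { exists a0; exact HA0. } { intros x [Hx _]; exact Hx. }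
          destruct (ac_lubs D HD A) as [l' [Hl' HDl']].
          { exists a0; exact HA0. } { intros x Hx; apply HAiff in Hx; apply Hx. }
          rewrite <- (lub_unique A l l' Hl Hl') in HDl'.
          destruct (next_elem C c A l HC Hc HAC Hl HCl) as [[H1 H2]|[H1 H2]];
          destruct (next_elem D d A l HD Hd HAiff Hl HDl') as [[H3 H4]|[H3 H4]];
            try contradiction; congruence.
        - assert (E1 : a0 = c).
          { apply NNPP. intro Hn. apply HA0. split; [apply (ac_a0 C HC)|].
            split; [apply (ac_a0 C HC); exact Hc| exact Hn]. }
          assert (E2 : a0 = d).
          { apply NNPP. intro Hn. apply HA0. apply HAiff. split; [apply (ac_a0 D HD)|].
            split; [apply (ac_a0 D HD); exact Hd| exact Hn]. }
          congruence. }
      subst d. apply HQc. split; [exact Hd|].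
      intros y; split.
      - intros [HCy Hyc]. split; [|exact Hyc].
        destruct (classic (y = c)) as [ ->|Hyn]; [exact Hd|].
        assert (HAy : A y) by (split; [exact HCy| split; auto]).
        apply HAiff in HAy. apply HAy.
      - intros [HDy Hyc]. split; [|exact Hyc].
        destruct (classic (y = c)) as [ ->|Hyn]; [exact Hc|].
        assert (HAy : A y) by (apply HAiff; split; [exact HDy| split; auto]).
        apply HAy. }
    split.
    + intros x Hx. exact (proj1 (HDA x Hx)).
    + intros d' c' Hd' Hc' Hcd'.
      destruct (HDA d' Hd') as [_ [Hdc Hdne]].
      assert (Hlt : lt le c' c).
      { split; [eauto|]. intro Heq. subst c'. apply Hdne. apply le_antisym; auto. }
      exact (proj1 (Hbelow c' Hc' Hlt)).
Qed.

Lemma seg_W C z : a0_chain le f a0 C -> C z -> Wset le f a0 z.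
Proof.
  intros HC Hz.
  exists (fun x => C x /\ le x z).
  assert (Hlubz : is_lub le (fun x => C x /\ le x z) z).
  { split. - intros y [_ H]; exact H. - intros u Hu. apply Hu. split; auto. }
  split; [|exact Hlubz].
  split; [|split; [|split]].
  - intros P HP Hsub. apply (ac_wo C HC P HP). intros x Hx. exact (proj1 (Hsub x Hx)).
  - destruct (ac_a0 C HC) as [Ha Hmin]. split.
    + split; auto.
    + intros c [Hc _]; auto.
  - intros P HP Hsub. destruct (ac_lubs C HC P HP) as [l [Hl HCl]].
    { intros x Hx; exact (proj1 (Hsub x Hx)). }
    exists l. split; [exact Hl|]. split; [exact HCl|]. apply (proj2 Hl).
    intros y Hy. exact (proj2 (Hsub y Hy)).
  - intros x [Hx Hxz] Hnl.
    assert (Hne : x <> z). { intro Heq; subst x. apply Hnl; exact Hlubz. }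
    assert (HnlC : ~ is_lub le C x). { intros [Hub _]. apply Hne. apply le_antisym; auto. }
    destruct (ac_succ C HC x Hx HnlC) as [Hf [Hlt Hnb]].
    split; [split; [exact Hf|] | split; [exact Hlt|]].
    + destruct (ac_chain C HC z (f x) Hz Hf) as [H1|H1]; [|exact H1].
      destruct (classic (z = f x)) as [ ->|Hn]; [apply le_refl|].
      exfalso. apply Hnb. exists z. split; [exact Hz|]. split; split; auto.
    + intros [y [[Hy _] Hb]]. apply Hnb. exists y. auto.
Qed.

Lemma W_a0 : Wset le f a0 a0.
Proof.
  exists (fun x => x = a0).
  assert (Hl : is_lub le (fun x => x = a0) a0).
  { split. - intros y ->; apply le_refl. - intros u Hu; apply Hu; reflexivity. }
  split; [|exact Hl].
  split; [|split; [|split]].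
  - intros P [y Hy] Hsub. exists y. split; [exact Hy|].
    intros z Hz. rewrite (Hsub y Hy), (Hsub z Hz). apply le_refl.
  - split; [reflexivity|]. intros c ->; apply le_refl.
  - intros P [y Hy] Hsub. exists a0. split; [|reflexivity]. split.
    + intros z Hz. rewrite (Hsub z Hz). apply le_refl.
    + intros u Hu. rewrite <- (Hsub y Hy). apply Hu; exact Hy.
  - intros z -> Hn. contradiction.
Qed.

Hypothesis Ha0 : le a0 (f a0).
Hypothesis Hmono : forall x y, Wset le f a0 x -> Wset le f a0 y -> le x y -> le (f x) (f y).

Lemma W_f x : Wset le f a0 x -> Wset le f a0 (f x).
Proof.
  intros [C [HC Hx]].
  pose proof (lub_in C x HC Hx) as HCx.
  assert (HubC : forall y, C y -> le y x) by (apply Hx).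
  assert (Hxfx : le x (f x)).
  { destruct (classic (x = a0)) as [ ->|Hxa]; [exact Ha0|].
    pose (D := fun y => C y /\ y <> x).
    destruct (ac_lubs C HC D) as [l [Hl HCl]].
    { exists a0. split; [apply (ac_a0 C HC)|auto]. }
    { intros y [Hy _]; exact Hy. }
    assert (Hlx : le l x). { apply (proj2 Hl). intros y [Hy _]. apply HubC; exact Hy. }
    destruct (classic (l = x)) as [Heq|Hne].
    - subst l. apply (proj2 Hl). intros y [Hy Hyx].
      destruct (classic (is_lub le C y)) as [Hly|Hny].
      + exfalso. apply Hyx. apply (lub_unique C); auto.
      + destruct (ac_succ C HC y Hy Hny) as [_ [[Hyf _] _]].
        apply le_trans with (f y); [exact Hyf|].
        apply Hmono; [exact (seg_W C y HC Hy) | exact (seg_W C x HC HCx) | apply HubC; exact Hy].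
    - assert (Hnl : ~ is_lub le C l). { intro H. apply Hne. apply (lub_unique C); auto. }
      destruct (ac_succ C HC l HCl Hnl) as [Hfl [[Hlf Hlfne] Hnb]].
      assert (Hflx : f l = x).
      { apply NNPP. intro Hn. apply Hlfne. apply le_antisym; [exact Hlf|].
        apply (proj1 Hl). split; auto. }
      rewrite <- Hflx at 1.
      apply Hmono; [exact (seg_W C l HC HCl) | exact (seg_W C x HC HCx) | exact Hlx]. }
  destruct (classic (x = f x)) as [Heq|Hne].
  - rewrite <- Heq. exists C; auto.
  - pose (C' := fun y => C y \/ y = f x).
    exists C'.
    assert (Hl' : is_lub le C' (f x)).
    { split.
      - intros y [Hy| ->]; [eapply le_trans; [apply HubC; exact Hy|exact Hxfx] | apply le_refl].
      - intros u Hu. apply Hu. right; reflexivity. }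
    split; [|exact Hl'].
    split; [|split; [|split]].
    + intros P HP Hsub.
      destruct (classic (exists y, P y /\ C y)) as [[y [HPy HCy]]|Hno].
      * destruct (ac_wo C HC (fun z => P z /\ C z)) as [m [[HPm HCm] Hm]].
        { exists y; auto. } { intros z [_ H]; exact H. }
        exists m. split; [exact HPm|]. intros z HPz.
        destruct (Hsub z HPz) as [HCz| ->]; [apply Hm; auto|].
        eapply le_trans; [apply HubC; exact HCm| exact Hxfx].
      * destruct HP as [y HPy]. exists y. split; [exact HPy|].
        intros z HPz.
        assert (Hy : y = f x).
        { destruct (Hsub y HPy) as [HCy| ->]; [exfalso; apply Hno; eauto|reflexivity]. }
        assert (Hz : z = f x).
        { destruct (Hsub z HPz) as [HCz| ->]; [exfalso; apply Hno; eauto|reflexivity]. }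
        rewrite Hy, Hz; apply le_refl.
    + destruct (ac_a0 C HC) as [Ha Hmin]. split; [left; exact Ha|].
      intros c [Hc| ->]; [auto|]. eapply le_trans; [apply Hmin; exact HCx|exact Hxfx].
    + intros P HP Hsub.
      destruct (classic (P (f x))) as [HPf|HPf].
      * exists (f x). split; [|right; reflexivity]. split.
        -- intros y HPy. apply (proj1 Hl'). apply Hsub; exact HPy.
        -- intros u Hu. apply Hu; exact HPf.
      * destruct (ac_lubs C HC P HP) as [l [Hl HCl]].
        { intros y HPy. destruct (Hsub y HPy) as [H| ->]; [exact H|contradiction]. }
        exists l; split; [exact Hl|left; exact HCl].
    + intros z Hz Hnl.
      assert (Hzf : z <> f x). { intro; subst z. apply Hnl. exact Hl'. }
      destruct Hz as [HCz| Hzf']; [|contradiction].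
      destruct (classic (z = x)) as [ ->|Hzx].
      * split; [right; reflexivity|]. split; [split; assumption|].
        intros [y [[HCy| ->] [[Hxy Hxyne] Hyf]]].
        -- apply Hxyne. apply le_antisym; auto.
        -- destruct Hyf as [_ H]; apply H; reflexivity.
      * assert (HnlC : ~ is_lub le C z). { intro H. apply Hzx. apply (lub_unique C); auto. }
        destruct (ac_succ C HC z HCz HnlC) as [Hf [Hlt Hnb]].
        split; [left; exact Hf|]. split; [exact Hlt|].
        intros [y [[HCy| ->] [Hzy Hyf]]].
        -- apply Hnb; eauto.
        -- destruct Hyf as [Hle Hn]. apply Hne. apply le_antisym; [exact Hxfx|].
           eapply le_trans; [exact Hle| apply HubC; exact Hf].
Qed.

Hypothesis Hind : strictly_inductive le.

Lemma W_lubs : closed_under_lubs le (Wset le f a0).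
Proof.
  intros P HP HsubP.
  pose (U := fun x => exists C, a0_chain le f a0 C /\ (exists p, P p /\ is_lub le C p) /\ C x).
  assert (HUchain : is_chain le U).
  { intros x y [C [HC [_ Hx]]] [D [HD [_ Hy]]].
    destruct (compare C D HC HD) as [[Hs _]|[Hs _]].
    - apply (ac_chain D HD); auto.
    - apply (ac_chain C HC); auto. }
  assert (HUa0 : U a0).
  { destruct HP as [p Hp]. destruct (HsubP p Hp) as [C [HC Hl]].
    exists C. split; [exact HC|]. split; [exists p; auto|]. apply (ac_a0 C HC). }
  destruct (Hind U (ex_intro _ a0 HUa0) HUchain) as [l Hl].
  assert (HlP : is_lub le P l).
  { split.
    - intros p Hp. destruct (HsubP p Hp) as [C [HC HCp]]. apply (proj1 Hl).
      exists C. split; [auto|]. split; [exists p; auto|]. apply (lub_in C p HC HCp).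
    - intros u Hu. apply (proj2 Hl). intros x [C [HC [[p [Hp HCp]] Hx]]].
      apply le_trans with p; [apply (proj1 HCp); exact Hx| apply Hu; exact Hp]. }
  exists l. split; [exact HlP|].
  pose (V := fun x => U x \/ x = l).
  exists V.
  assert (HlV : is_lub le V l).
  { split.
    - intros y [Hy| ->]; [apply (proj1 Hl); exact Hy|apply le_refl].
    - intros u Hu. apply Hu. right; reflexivity. }
  split; [|exact HlV].
  split; [|split; [|split]].
  - intros Q HQ HsubQ.
    destruct (classic (exists y, Q y /\ U y)) as [[y [HQy [C [HC [HCp HCy]]]]]|Hno].
    + destruct (ac_wo C HC (fun z => Q z /\ C z)) as [m [[HQm HCm] Hm]].
      { exists y; auto. } { intros z [_ H]; exact H. }
      exists m. split; [exact HQm|]. intros z HQz.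
      destruct (HsubQ z HQz) as [[D [HD [HDp HDz]]]| ->].
      * destruct (compare C D HC HD) as [[Hs Hi]|[Hs Hi]].
        -- destruct (ac_chain D HD m z (Hs m HCm) HDz) as [H|H]; [exact H|].
           apply Hm. split; [exact HQz|]. exact (Hi m z HCm HDz H).
        -- apply Hm. split; auto.
      * apply (proj1 Hl). exists C. auto.
    + destruct HQ as [y HQy]. exists y. split; [exact HQy|]. intros z HQz.
      assert (Hy : y = l).
      { destruct (HsubQ y HQy) as [H|H]; [exfalso; apply Hno; eauto|exact H]. }
      assert (Hz : z = l).
      { destruct (HsubQ z HQz) as [H|H]; [exfalso; apply Hno; eauto|exact H]. }
      rewrite Hy, Hz; apply le_refl.
  - split; [left; exact HUa0|].
    intros c [[C [HC [_ Hc]]]| ->]; [apply (ac_a0 C HC); exact Hc | apply (proj1 Hl); exact HUa0].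
  - intros Q HQ HsubQ.
    destruct (classic (Q l)) as [HQl|HQl].
    + exists l. split; [|right; reflexivity]. split.
      * intros y Hy; apply (proj1 HlV); apply HsubQ; auto.
      * intros u Hu; apply Hu; exact HQl.
    + assert (HQU : forall y, Q y -> U y).
      { intros y Hy. destruct (HsubQ y Hy) as [H|H]; [exact H|]. subst y; contradiction. }
      assert (HQc : is_chain le Q). { intros x y Hx Hy. apply HUchain; auto. }
      destruct (Hind Q HQ HQc) as [q Hq].
      exists q. split; [exact Hq|].
      destruct (classic (is_ub le U q)) as [Hub|Hnub].
      * right. apply le_antisym.
        -- apply (proj2 Hq). intros y Hy. apply (proj1 Hl). auto.
        -- apply (proj2 Hl). exact Hub.
      * left. apply not_all_ex_not in Hnub. destruct Hnub as [x Hx].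
        apply imply_to_and in Hx. destruct Hx as [HUx Hxq].
        pose proof HUx as [C [HC [HCp HCx]]].
        assert (HQC : subset Q C).
        { intros y Hy. pose proof (HQU y Hy) as HUy.
          destruct HUy as [D [HD [HDp HDy]]].
          assert (Hyx : le y x).
          { destruct (HUchain y x (HQU y Hy) HUx) as [H|H]; [exact H|].
            exfalso. apply Hxq. apply le_trans with y; [exact H| apply (proj1 Hq); exact Hy]. }
          destruct (compare C D HC HD) as [[Hs Hi]|[Hs Hi]].
          - exact (Hi x y HCx HDy Hyx).
          - exact (Hs y HDy). }
        destruct (ac_lubs C HC Q HQ HQC) as [q' [Hq' HCq']].
        rewrite (lub_unique Q q q' Hq Hq').
        exists C. auto.
  - intros z Hz Hnl.
    assert (Hzl : z <> l). { intro; subst z. apply Hnl; exact HlV. }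
    destruct Hz as [HUz| Hzl']; [|contradiction].
    assert (Hex : exists x, U x /\ ~ le x z).
    { apply NNPP. intro Hn. apply Hzl. apply le_antisym.
      - apply (proj1 Hl); exact HUz.
      - apply (proj2 Hl). intros x Hx. apply NNPP. intro H. apply Hn. eauto. }
    destruct Hex as [x [HUx Hxz]].
    assert (Hzx : le z x).
    { destruct (HUchain z x HUz HUx) as [H|H]; [exact H|contradiction]. }
    assert (HE : exists E, a0_chain le f a0 E /\ (exists p, P p /\ is_lub le E p) /\ E z /\ E x).
    { destruct HUz as [C [HC [HCp HCz]]]. destruct HUx as [D [HD [HDp HDx]]].
      destruct (compare C D HC HD) as [[Hs Hi]|[Hs Hi]].
      - exists D. auto.
      - exists C. auto. }
    destruct HE as [E [HE [HEp [HEz HEx]]]].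
    assert (Hnl' : ~ is_lub le E z). { intros [H _]. apply Hxz. apply H; exact HEx. }
    destruct (ac_succ E HE z HEz Hnl') as [Hfz [Hlt Hnb]].
    assert (HUf : U (f z)) by (exists E; auto).
    split; [left; exact HUf|]. split; [exact Hlt|].
    intros [y [[HUy| ->] [Hzy Hyf]]].
    + destruct HUy as [F [HF [HFp HFy]]].
      destruct (compare E F HE HF) as [[Hs Hi]|[Hs Hi]].
      * apply Hnb. exists y. split; [|auto]. exact (Hi (f z) y Hfz HFy (proj1 Hyf)).
      * apply Hnb. exists y. split; [|auto]. exact (Hs y HFy).
    + destruct Hyf as [Hle Hn]. apply Hn. apply le_antisym; [exact Hle|].
      apply (proj1 Hl). exact HUf.
Qed.

End S.

Theorem mainTheorem5 (T : Type) (le : T -> T -> Prop)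
  (le_refl : forall x, le x x)
  (le_antisym : forall x y, le x y -> le y x -> x = y)
  (le_trans : forall x y z, le x y -> le y z -> le x z)
  (X_nonempty : inhabited T)
  (Hind : strictly_inductive le)
  (f : T -> T) (a0 : T) (Ha0 : le a0 (f a0))
  (N : T -> Prop) (HN : smallest_closed le f a0 N)
  (Hmono : forall x y, Wset le f a0 x -> Wset le f a0 y -> le x y -> le (f x) (f y)) :
  subset N (Wset le f a0).
Proof.
  destruct HN as [_ Hmin]. apply Hmin.
  - apply W_a0; assumption.
  - intros z Hz. eapply W_f; eassumption.
  - eapply W_lubs; eassumption.
Qed.
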